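(* Let $c_p\ge 1$ be an integer, let $k\ge 1$, and for each $1\le i\le k$ let $\gamma_i>0$ be a real constant, let $f_i(\alpha)$ be a pseudo-polynomial in $\alpha$, and let $g_i(n)$ be a pseudo-polynomial in $n$ in which every monomial $c\cdot n^{a}\ln^{b} n$ has $a\ge 0$ and $b\ge 0$. Put $$Q_L(\alpha,n):=\sum_{i=1}^{k}\gamma_i\cdot \exp\big(f_i(\alpha)+g_i(n)\big),$$ and consider the canonical constraint $$Q:\quad \exists \alpha_0\ \forall \alpha\ge \alpha_0\ \forall \text{ integers } n\ge c_p:\ Q_L(\alpha,n)\le 1 .$$ Run the procedure $\mathsf{Decide}$ (described in the context) on this input. Then: (1) (Completeness) If for arbitrarily large $\alpha$ there exists an integer $n\ge c_p$ with $Q_L(\alpha,n)>1$ (i.e. $Q$ does not hold), then $\mathsf{Decide}$ returns False. (2) (Soundness) For every $\varepsilon>0$: if there is $\alpha_0$ such that $Q_L(\alpha,n)\le 1-\varepsilon$ for all $\alpha\ge\alpha_0$ and all integers $n\ge c_p$, then $\mathsf{Decide}$ returns True.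
   Context: A pseudo-polynomial in a variable $x$ is a finite sum $\sum_j c_j\, x^{a_j}\ln^{b_j}x$ with real coefficients $c_j$ and integer exponents $a_j,b_j$ (considered for sufficiently large real $x$); limits as $x\to\infty$ are taken in $\mathbb{R}\cup\{\pm\infty\}$, with $\exp(-\infty)=0$. The procedure uses an oracle $\mathsf{NegativeLB}(P)$ that, given a pseudo-polynomial $P(n)$ for which such an integer exists, returns an integer $T^*$ such that $P(n)\le 0$ for every real $n\ge T^*$. Procedure $\mathsf{Decide}$: Step 1: set $T:=c_p$. For $i=1,\dots,k$: compute $M_i=\lim_{n\to\infty} g_i(n)$; if $M_i=+\infty$ return False; otherwise let $g_i'$ be the derivative of $g_i$ and set $T:=\max\{T,\mathsf{NegativeLB}(g_i')\}$. Step 2: for each integer $\bar n$ with $c_p\le \bar n\le T$: set $R:=0$; for $i=1,\dots,k$: compute $\Delta=\lim_{\alpha\to\infty}\big(f_i(\alpha)+g_i(\bar n)\big)$; if $\Delta=+\infty$ return False; otherwise set $R:=R+\gamma_i\exp(\Delta)$, and if $R\ge 1$ return False. Step 3: return True. *)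

(* Defs.v *)
From Stdlib Require Import Reals Lra ZArith List.
From Coquelicot Require Import Coquelicot.
Import ListNotations.
Open Scope R_scope.

(* A pseudo-polynomial sum_j c_j x^{a_j} ln^{b_j} x, as a list of (c_j, a_j, b_j). *)
Definition pp := list (R * Z * Z).

Definition pp_eval (P : pp) (x : R) : R :=
  fold_right (fun '(c, a, b) acc => c * powerRZ x a * powerRZ (ln x) b + acc) 0 P.

(* symbolic derivative: (c x^a ln^b x)' = c a x^(a-1) ln^b x + c b x^(a-1) ln^(b-1) x *)
Definition pp_deriv (P : pp) : pp :=
  flat_map (fun '(c, a, b) =>
    [(c * IZR a, (a - 1)%Z, b); (c * IZR b, (a - 1)%Z, (b - 1)%Z)]) P.

Definition lim_infty (h : R -> R) : Rbar := Lim h p_infty.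

(* exp on R ∪ {-oo} with exp(-oo) = 0 (never applied to +oo by Decide) *)
Definition rbar_exp (d : Rbar) : R :=
  match d with Finite r => exp r | _ => 0 end.

Definition NegativeLB_spec (O : pp -> Z) : Prop :=
  forall P : pp,
    (exists T : Z, forall n : R, IZR T <= n -> pp_eval P n <= 0) ->
    forall n : R, IZR (O P) <= n -> pp_eval P n <= 0.

(* Input: list of (gamma_i, f_i, g_i), i = 1..k *)
Definition input := list (R * pp * pp).

(* Step 1: returns None for "return False", Some T otherwise *)
Fixpoint decide_step1 (O : pp -> Z) (data : input) (T : Z) : option Z :=
  match data with
  | nil => Some T
  | (_, _, g) :: rest =>
      match lim_infty (pp_eval g) with
      | p_infty => None
      | _ => decide_step1 O rest (Z.max T (O (pp_deriv g)))
      end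
  end.

Fixpoint decide_step2 (data : input) (nbar : R) (Racc : R) : bool :=
  match data with
  | nil => true
  | (gam, f, g) :: rest =>
      match lim_infty (fun alpha => pp_eval f alpha + pp_eval g nbar) with
      | p_infty => false
      | d =>
          let R' := Racc + gam * rbar_exp d in
          if Rle_dec 1 R' then false else decide_step2 rest nbar R'
      end
  end.

Definition Zrange (lo hi : Z) : list Z :=
  map (fun i => (lo + Z.of_nat i)%Z) (seq 0 (Z.to_nat (hi - lo + 1))).

Definition Decide (O : pp -> Z) (cp : Z) (data : input) : bool :=
  match decide_step1 O data cp with
  | None => false
  | Some T => forallb (fun nbar => decide_step2 data (IZR nbar) 0) (Zrange cp T)
  end.

Definition QL (data : input) (alpha n : R) : R :=
  fold_right (fun '(gam, f, g) acc => gam * exp (pp_eval f alpha + pp_eval g n) + acc) 0 data.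

(* Main.v *)
Require Import Defs.
From Stdlib Require Import Reals Lra Lia ZArith List.
From Coquelicot Require Import Coquelicot.
Import ListNotations.
Open Scope R_scope.

Definition ev (P : R -> Prop) := exists X, forall x, X <= x -> P x.
Definition T0 (f : R -> R) := forall e, 0 < e -> ev (fun x => Rabs (f x) < e).
Definition TL (f : R -> R) l := T0 (fun x => f x - l).
Definition TI (f : R -> R) := forall M, ev (fun x => M < f x).
Definition Tbar (f : R -> R) (l : Rbar) :=
  match l with Finite r => TL f r | p_infty => TI f | m_infty => TI (fun x => - f x) end.

Lemma ev_and P Q : ev P -> ev Q -> ev (fun x => P x /\ Q x).
Proof.
  intros [X HX] [Y HY]; exists (Rmax X Y); intros x Hx; split.
  apply HX; generalize (Rmax_l X Y); lra. apply HY; generalize (Rmax_r X Y); lra.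
Qed.

Lemma ev_ge X : ev (fun x => X <= x).
Proof. exists X; auto. Qed.

Lemma ev_mono (P Q : R -> Prop) : (forall x, P x -> Q x) -> ev P -> ev Q.
Proof. intros H [X HX]; exists X; auto. Qed.

Lemma Tbar_lim f l : Tbar f l -> Lim f p_infty = l.
Proof.
  intros H; apply is_lim_unique; apply is_lim_spec.
  destruct l as [r| |]; simpl in *.
  - intros eps; destruct (H eps (cond_pos eps)) as [X HX]; exists X; intros; apply HX; lra.
  - intros M; destruct (H M) as [X HX]; exists X; intros; apply HX; lra.
  - intros M; destruct (H (-M)) as [X HX]; exists X; intros x Hx.
    assert (-M < - f x) by (apply HX; lra). lra.
Qed.

Lemma Tbar_unique f l l' : Tbar f l -> Tbar f l' -> l = l'.
Proof. intros H H'; rewrite <- (Tbar_lim _ _ H), <- (Tbar_lim _ _ H'); auto. Qed.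

Lemma T0_ext f g : ev (fun x => f x = g x) -> T0 f -> T0 g.
Proof.
  intros He H e He0; generalize (ev_and _ _ He (H e He0)); apply ev_mono.
  intros x [E1 E2]; rewrite <- E1; auto.
Qed.

Lemma T0_plus f g : T0 f -> T0 g -> T0 (fun x => f x + g x).
Proof.
  intros Hf Hg e He.
  generalize (ev_and _ _ (Hf (e/2) ltac:(lra)) (Hg (e/2) ltac:(lra))); apply ev_mono.
  intros x [A B]; generalize (Rabs_triang (f x) (g x)); lra.
Qed.

Lemma T0_scal c f : T0 f -> T0 (fun x => c * f x).
Proof.
  intros Hf e He.
  assert (Hc : 0 < Rabs c + 1) by (generalize (Rabs_pos c); lra).
  generalize (Hf (e / (Rabs c + 1)) ltac:(apply Rdiv_lt_0_compat; lra)); apply ev_mono.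
  intros x Hx; rewrite Rabs_mult.
  assert (Rabs c * Rabs (f x) <= (Rabs c + 1) * Rabs (f x)) by
    (generalize (Rabs_pos (f x)); nra).
  assert ((Rabs c + 1) * Rabs (f x) < (Rabs c + 1) * (e / (Rabs c + 1))) by
    (apply Rmult_lt_compat_l; lra).
  replace ((Rabs c + 1) * (e / (Rabs c + 1))) with e in * by (field; lra). lra.
Qed.

Lemma T0_const0 : T0 (fun _ => 0).
Proof. intros e He; exists 0; intros; rewrite Rabs_R0; lra. Qed.

Lemma T0_le f g : ev (fun x => Rabs (g x) <= Rabs (f x)) -> T0 f -> T0 g.
Proof.
  intros He H e He0; generalize (ev_and _ _ He (H e He0)); apply ev_mono.
  intros x [E1 E2]; lra.
Qed.

Lemma powexp k : forall eps, 0 < eps -> exists Y, forall y, Y <= y -> y ^ k <= eps * exp y.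
Proof.
  induction k as [|k IH]; intros eps He.
  - exists (/ eps); intros y Hy; simpl.
    generalize (exp_ineq1_le y); intros Hexp.
    assert (0 < / eps) by (apply Rinv_0_lt_compat; lra).
    assert (eps * / eps = 1) by (field; lra).
    assert (eps * y <= eps * exp y) by (apply Rmult_le_compat_l; lra).
    assert (eps * / eps <= eps * y) by (apply Rmult_le_compat_l; lra). lra.
  - assert (H2 : 0 < 2 ^ S k) by (apply pow_lt; lra).
    destruct (IH (eps / 2 ^ S k) ltac:(apply Rdiv_lt_0_compat; lra)) as [Y HY].
    exists (Rmax (2 * Y) 0); intros y Hy.
    generalize (Rmax_l (2*Y) 0) (Rmax_r (2*Y) 0); intros M1 M2.
    assert (A : (y/2) ^ k <= eps / 2 ^ S k * exp (y/2)) by (apply HY; lra).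
    generalize (exp_ineq1_le (y/2)); intros B.
    assert (C : 0 <= (y/2)^k) by (apply pow_le; lra).
    assert (D : (y/2)^(S k) <= eps / 2 ^ S k * exp (y/2) * exp (y/2)).
    { change ((y/2)^(S k)) with ((y/2) * (y/2)^k). rewrite (Rmult_comm (y/2)).
      apply Rmult_le_compat; lra. }
    rewrite Rmult_assoc, <- exp_plus in D. replace (y/2 + y/2) with y in D by field.
    replace y with (2 * (y/2)) at 1 by field. rewrite Rpow_mult_distr.
    apply Rmult_le_compat_l with (r := 2 ^ S k) in D; [|lra].
    replace (2 ^ S k * (eps / 2 ^ S k * exp y)) with (eps * exp y) in D by (field; lra).
    lra.
Qed.

Lemma lnpow k eps : 0 < eps -> ev (fun x => 1 <= x /\ ln x ^ k <= eps * x).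
Proof.
  intros He; destruct (powexp k eps He) as [Y HY].
  exists (Rmax 1 (exp Y)); intros x Hx.
  generalize (Rmax_l 1 (exp Y)) (Rmax_r 1 (exp Y)); intros M1 M2.
  split; [lra|].
  assert (ln (exp Y) <= ln x) by (apply ln_le; [apply exp_pos|lra]).
  rewrite ln_exp in H. rewrite <- (exp_ln x) at 2 by lra. apply HY; lra.
Qed.

Definition mon (a b : Z) (x : R) := powerRZ x a * powerRZ (ln x) b.

Lemma powerRZ_neg_le y z : 1 <= y -> (z <= -1)%Z -> powerRZ y z <= / y.
Proof.
  intros Hy Hz. destruct z as [|p|p]; try lia. simpl.
  apply Rinv_le_contravar; [lra|].
  assert (Pos.to_nat p = S (pred (Pos.to_nat p))) by lia.
  rewrite H; simpl. generalize (pow_R1_Rle y (pred (Pos.to_nat p)) Hy). nra.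
Qed.

Lemma powerRZ_abs_le y z : 1 <= y -> 0 < powerRZ y z <= y ^ Z.abs_nat z.
Proof.
  intros Hy. split; [apply powerRZ_lt; lra|].
  destruct z as [|p|p]; simpl; try lra.
  generalize (pow_R1_Rle y (Pos.to_nat p) Hy); intros H.
  assert (/ y ^ Pos.to_nat p <= / 1) by (apply Rinv_le_contravar; lra).
  rewrite Rinv_1 in H0; lra.
Qed.

Lemma mon_pos a b x : 1 < x -> 0 < mon a b x.
Proof.
  intros Hx; unfold mon; apply Rmult_lt_0_compat; apply powerRZ_lt; [lra|].
  rewrite <- ln_1; apply ln_increasing; lra.
Qed.

Lemma ln_gt0 x : 1 < x -> 0 < ln x.
Proof. intros; rewrite <- ln_1; apply ln_increasing; lra. Qed.

Lemma mon_mul a b a' b' x : 1 < x -> mon a b x * mon a' b' x = mon (a + a') (b + b') x.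
Proof.
  intros Hx; unfold mon. generalize (ln_gt0 x Hx); intros.
  rewrite !powerRZ_add by lra. ring.
Qed.

Lemma mon_00 x : mon 0 0 x = 1.
Proof. unfold mon; simpl; ring. Qed.

Lemma mon_ratio a b a' b' x : 1 < x -> mon a' b' x / mon a b x = mon (a' - a) (b' - b) x.
Proof.
  intros Hx. generalize (mon_pos a b x Hx); intros Hp.
  replace (mon a' b' x) with (mon (a'-a) (b'-b) x * mon a b x).
  field; lra. rewrite mon_mul by lra. f_equal; ring.
Qed.

Definition lexlt (a b a' b' : Z) := (a < a')%Z \/ (a = a' /\ b < b')%Z.

Lemma exp1_gt1 : 1 < exp 1.
Proof. generalize (exp_ineq1 1 ltac:(lra)); lra. Qed.

Lemma B0 p q : lexlt p q 0 0 -> T0 (mon p q).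
Proof.
  intros [Hp | [Hp Hq]].
  - intros e He.
    generalize (ev_and _ _ (lnpow (Z.abs_nat q) (e/2) ltac:(lra)) (ev_ge (exp 1))).
    apply ev_mono; intros x [[H1 H2] H3].
    generalize exp1_gt1; intros E1.
    assert (Hl : 1 <= ln x) by (rewrite <- (ln_exp 1); apply ln_le; [apply exp_pos|lra]).
    assert (Hx1 : 1 < x) by lra.
    rewrite Rabs_pos_eq by (generalize (mon_pos p q x Hx1); lra).
    unfold mon.
    generalize (powerRZ_neg_le x p ltac:(lra) ltac:(lia)) (powerRZ_abs_le (ln x) q Hl)
      (powerRZ_lt x p ltac:(lra)); intros A [B C] D.
    assert (powerRZ x p * powerRZ (ln x) q <= / x * ln x ^ Z.abs_nat q)
      by (apply Rmult_le_compat; lra).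
    assert (/ x * ln x ^ Z.abs_nat q <= / x * (e / 2 * x)).
    { apply Rmult_le_compat_l; [left; apply Rinv_0_lt_compat; lra| lra]. }
    replace (/ x * (e / 2 * x)) with (e/2) in H0 by (field; lra). lra.
  - subst p. intros e He.
    generalize (ev_ge (exp (Rmax 1 (2 / e)))); apply ev_mono; intros x Hx.
    generalize (Rmax_l 1 (2/e)) (Rmax_r 1 (2/e)); intros M1 M2.
    assert (Hl : Rmax 1 (2/e) <= ln x).
    { rewrite <- (ln_exp (Rmax 1 (2/e))); apply ln_le; [apply exp_pos|lra]. }
    assert (Hx1 : 1 < x) by (rewrite <- (exp_ln x); [| generalize (exp_pos (Rmax 1 (2/e))); lra];
       rewrite <- exp_0; apply exp_increasing; lra).
    rewrite Rabs_pos_eq by (generalize (mon_pos 0 q x Hx1); lra).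
    unfold mon; rewrite powerRZ_O, Rmult_1_l.
    generalize (powerRZ_neg_le (ln x) q ltac:(lra) ltac:(lia)); intros A.
    assert (/ ln x <= / (2/e)) by (apply Rinv_le_contravar; [apply Rdiv_lt_0_compat|]; lra).
    replace (/ (2/e)) with (e/2) in H by (field; lra). lra.
Qed.

Lemma TI_inv g : ev (fun x => 0 < g x) -> T0 g -> TI (fun x => / g x).
Proof.
  intros Hp H M.
  set (K := Rmax M 0 + 1).
  assert (HK : 0 < K) by (unfold K; generalize (Rmax_r M 0); lra).
  generalize (ev_and _ _ Hp (H (/ K) ltac:(apply Rinv_0_lt_compat; lra))); apply ev_mono.
  intros x [A B]; rewrite Rabs_pos_eq in B by lra.
  assert (/ / K < / g x) by (apply Rinv_lt_contravar; [nra|lra]).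
  rewrite Rinv_inv in H0. unfold K in *; generalize (Rmax_l M 0); lra.
Qed.

Lemma Binf p q : lexlt 0 0 p q -> TI (mon p q).
Proof.
  intros H.
  assert (H0 : T0 (mon (-p) (-q))) by (apply B0; unfold lexlt in *; lia).
  assert (E : ev (fun x => / mon (-p) (-q) x = mon p q x /\ 0 < mon (-p) (-q) x)).
  { exists 2; intros x Hx. split; [|apply mon_pos; lra].
    generalize (mon_mul p q (-p) (-q) x ltac:(lra)) (mon_pos p q x ltac:(lra))
      (mon_pos (-p) (-q) x ltac:(lra)).
    replace (p + - p)%Z with 0%Z by ring. replace (q + - q)%Z with 0%Z by ring.
    rewrite mon_00; intros A B C. field_simplify_eq; [lra|lra]. }
  intros M. destruct (TI_inv _ (ev_mono _ _ (fun x H => proj2 H) E) H0 M) as [X HX].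
  destruct E as [Y HY]. exists (Rmax X Y); intros x Hx.
  generalize (Rmax_l X Y) (Rmax_r X Y); intros.
  destruct (HY x ltac:(lra)) as [E _]. rewrite <- E. apply HX; lra.
Qed.

Definition keyeq (a b : Z) (t : R * Z * Z) : bool :=
  let '(_, a', b') := t in (Z.eqb a' a && Z.eqb b' b)%bool.
Definition coefsum (a b : Z) (P : pp) : R :=
  fold_right (fun t acc => let '(c, a', b') := t in
     if (Z.eqb a' a && Z.eqb b' b)%bool then c + acc else acc) 0 P.

Lemma pp_split a b (P : pp) x :
  pp_eval P x = coefsum a b P * mon a b x + pp_eval (filter (fun t => negb (keyeq a b t)) P) x.
Proof.
  induction P as [|[[c a'] b'] P IH]; simpl; [ring|].
  destruct (Z.eqb_spec a' a), (Z.eqb_spec b' b); simpl; rewrite IH; try (subst; unfold mon; ring).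
Qed.

Lemma lexmax (P : pp) : P <> [] -> exists c a b, In (c,a,b) P /\
   forall c' a' b', In (c',a',b') P -> ~ lexlt a b a' b'.
Proof.
  induction P as [|[[c a] b] P IH]; intros Hne; [congruence|].
  destruct P as [|t P0].
  - exists c, a, b; split; [left; auto|]. intros c' a' b' [H|[]]. inversion H; subst.
    unfold lexlt; lia.
  - destruct (IH ltac:(discriminate)) as [c1 [a1 [b1 [Hin Hmax]]]].
    assert (D : lexlt a1 b1 a b \/ ~ lexlt a1 b1 a b) by (unfold lexlt; lia).
    destruct D as [D|D].
    + exists c, a, b; split; [left; auto|]. intros c' a' b' [H|H].
      * inversion H; subst; unfold lexlt; lia.
      * generalize (Hmax _ _ _ H); unfold lexlt in *; lia.
    + exists c1, a1, b1; split; [right; auto|]. intros c' a' b' [H|H].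
      * inversion H; subst; auto.
      * exact (Hmax _ _ _ H).
Qed.

Lemma filter_len_lt {A} (f : A -> bool) t P : In t P -> f t = false ->
  (length (filter f P) < length P)%nat.
Proof.
  induction P as [|u P IH]; simpl; [tauto|]. intros [H|H] Hf.
  - subst; rewrite Hf. generalize (filter_length_le f P); lia.
  - destruct (f u); simpl; generalize (IH H Hf); lia.
Qed.

Definition decomp_prop (P : pp) :=
  exists S a b P', S <> 0 /\ (exists c, In (c,a,b) P) /\
    (forall x, pp_eval P x = S * mon a b x + pp_eval P' x) /\
    (forall c' a' b', In (c',a',b') P' -> lexlt a' b' a b /\ In (c',a',b') P).

Lemma decomp_n n : forall P : pp, (length P <= n)%nat ->
  (forall x, pp_eval P x = 0) \/ decomp_prop P.
Proof.
  induction n as [|n IH]; intros P Hl.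
  - destruct P; simpl in Hl; [|lia]. left; intros; reflexivity.
  - destruct P as [|t0 P0] eqn:EP. { left; intros; reflexivity. }
    rewrite <- EP in *.
    destruct (lexmax P ltac:(rewrite EP; discriminate)) as [c [a [b [Hin Hmax]]]].
    set (f := fun t => negb (keyeq a b t)).
    assert (Hsplit := pp_split a b P).
    assert (HP' : forall c' a' b', In (c',a',b') (filter f P) -> lexlt a' b' a b /\ In (c',a',b') P).
    { intros c' a' b' H. apply filter_In in H. destruct H as [H1 H2]. split; auto.
      generalize (Hmax _ _ _ H1). unfold f, keyeq in H2.
      destruct (Z.eqb_spec a' a), (Z.eqb_spec b' b); simpl in H2; try discriminate;
      unfold lexlt; lia. }
    destruct (Req_dec (coefsum a b P) 0) as [Hz|Hz].
    + assert (Hlen : (length (filter f P) <= n)%nat).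
      { assert (f (c,a,b) = false) by (unfold f, keyeq; rewrite !Z.eqb_refl; reflexivity).
        generalize (filter_len_lt f _ P Hin H). lia. }
      destruct (IH _ Hlen) as [H0 | [S [a2 [b2 [P2 [HS [[c2 Hc2] [Hid Hk]]]]]]]].
      * left; intros x; rewrite Hsplit, Hz, H0; ring.
      * right; exists S, a2, b2, P2; repeat split; auto.
        -- exists c2; apply (proj2 (HP' _ _ _ Hc2)).
        -- intros x; rewrite Hsplit, Hz, Hid; ring.
        -- apply (Hk _ _ _ H).
        -- apply (proj2 (HP' _ _ _ (proj2 (Hk _ _ _ H)))).
    + right; exists (coefsum a b P), a, b, (filter f P); repeat split; auto.
      exists c; auto. apply (HP' _ _ _ H). apply (HP' _ _ _ H).
Qed.

Lemma decomp P : (forall x, pp_eval P x = 0) \/ decomp_prop P.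
Proof. apply (decomp_n (length P)); lia. Qed.

Lemma ratio0 a b : forall L : pp, (forall c' a' b', In (c',a',b') L -> lexlt a' b' a b) ->
  T0 (fun x => pp_eval L x / mon a b x).
Proof.
  induction L as [|[[c a'] b'] L IH]; intros H.
  - apply T0_ext with (fun _ => 0); [|apply T0_const0].
    exists 0; intros; simpl; unfold Rdiv; ring.
  - apply T0_ext with (fun x => c * mon (a'-a) (b'-b) x + pp_eval L x / mon a b x).
    + exists 2; intros x Hx. rewrite <- mon_ratio by lra.
      generalize (mon_pos a b x ltac:(lra)); unfold mon; intros Hp. simpl. field. split; intro E; rewrite E in Hp; lra.
    + apply T0_plus; [apply T0_scal, B0|apply IH].
      * generalize (H c a' b' (or_introl eq_refl)); unfold lexlt; lia.
      * intros; apply (H c'); right; auto.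
Qed.

Lemma decomp_ratio P S a b P' :
  (forall x, pp_eval P x = S * mon a b x + pp_eval P' x) ->
  (forall c' a' b', In (c',a',b') P' -> lexlt a' b' a b /\ In (c',a',b') P) ->
  TL (fun x => pp_eval P x / mon a b x) S.
Proof.
  intros Hid Hk. unfold TL.
  apply T0_ext with (fun x => pp_eval P' x / mon a b x).
  - exists 2; intros x Hx. rewrite Hid. generalize (mon_pos a b x ltac:(lra)); intros; field; lra.
  - apply ratio0. intros; apply (Hk c'); auto.
Qed.

Lemma TL_bound u S : TL u S -> ev (fun x => Rabs (u x) <= Rabs S + 1).
Proof.
  intros H; generalize (H 1 ltac:(lra)); apply ev_mono; intros x Hx.
  replace (u x) with ((u x - S) + S) by ring. generalize (Rabs_triang (u x - S) S); lra.
Qed.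

Lemma TL_T0_mul u v S : TL u S -> T0 v -> T0 (fun x => u x * v x).
Proof.
  intros Hu Hv. apply T0_le with (fun x => (Rabs S + 1) * v x); [|apply T0_scal; auto].
  generalize (TL_bound _ _ Hu); apply ev_mono; intros x Hx.
  rewrite !Rabs_mult. rewrite (Rabs_pos_eq (Rabs S + 1)) by (generalize (Rabs_pos S); lra).
  apply Rmult_le_compat_r; auto using Rabs_pos.
Qed.

Lemma TL_pos u S : TL u S -> 0 < S -> ev (fun x => S/2 < u x).
Proof.
  intros H HS; generalize (H (S/2) ltac:(lra)); apply ev_mono; intros x Hx.
  apply Rabs_def2 in Hx; lra.
Qed.

Lemma TL_neg u S : TL u S -> S < 0 -> ev (fun x => u x < S/2).
Proof.
  intros H HS; generalize (H (-S/2) ltac:(lra)); apply ev_mono; intros x Hx.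
  apply Rabs_def2 in Hx; lra.
Qed.

Lemma TL_TI_mul u v S : TL u S -> 0 < S -> TI v -> TI (fun x => u x * v x).
Proof.
  intros Hu HS Hv M.
  generalize (ev_and _ _ (TL_pos _ _ Hu HS) (Hv (Rmax M 0 * 2 / S))); apply ev_mono.
  intros x [A B]. generalize (Rmax_l M 0) (Rmax_r M 0); intros M1 M2.
  assert (0 <= Rmax M 0 * 2 / S) by (apply Rmult_le_pos; [lra| left; apply Rinv_0_lt_compat; lra]).
  assert (S / 2 * v x <= u x * v x) by (apply Rmult_le_compat_r; lra).
  assert (S / 2 * (Rmax M 0 * 2 / S) < S / 2 * v x) by (apply Rmult_lt_compat_l; lra).
  replace (S / 2 * (Rmax M 0 * 2 / S)) with (Rmax M 0) in H1 by (field; lra). lra.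
Qed.

Lemma decomp_sign P S a b P' :
  (forall x, pp_eval P x = S * mon a b x + pp_eval P' x) ->
  (forall c' a' b', In (c',a',b') P' -> lexlt a' b' a b /\ In (c',a',b') P) ->
  (0 < S -> ev (fun x => 0 < pp_eval P x)) /\ (S < 0 -> ev (fun x => pp_eval P x < 0)).
Proof.
  intros Hid Hk. generalize (decomp_ratio _ _ _ _ _ Hid Hk); intros HT. split; intros HS.
  - generalize (ev_and _ _ (TL_pos _ _ HT HS) (ev_ge 2)); apply ev_mono; intros x [A B].
    generalize (mon_pos a b x ltac:(lra)); intros Hp.
    replace (pp_eval P x) with (pp_eval P x / mon a b x * mon a b x) by (field; lra).
    apply Rmult_lt_0_compat; lra.
  - generalize (ev_and _ _ (TL_neg _ _ HT HS) (ev_ge 2)); apply ev_mono; intros x [A B].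
    generalize (mon_pos a b x ltac:(lra)); intros Hp.
    replace (pp_eval P x) with (pp_eval P x / mon a b x * mon a b x) by (field; lra).
    assert (pp_eval P x / mon a b x * mon a b x < 0 * mon a b x) by (apply Rmult_lt_compat_r; lra).
    lra.
Qed.

Lemma TI_ext f g : ev (fun x => f x = g x) -> TI f -> TI g.
Proof.
  intros He H M; generalize (ev_and _ _ He (H M)); apply ev_mono; intros x [A B]; congruence.
Qed.

Lemma L1 P : exists l, Tbar (pp_eval P) l.
Proof.
  destruct (decomp P) as [H0 | [S [a [b [P' [HS [_ [Hid Hk]]]]]]]].
  - exists (Finite 0); simpl. unfold TL. apply T0_ext with (fun _ => 0); [|apply T0_const0].
    exists 0; intros; rewrite H0; ring.
  - generalize (decomp_ratio _ _ _ _ _ Hid Hk); intros HT.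
    assert (Hrw : ev (fun x => pp_eval P x / mon a b x * mon a b x = pp_eval P x)).
    { exists 2; intros x Hx; generalize (mon_pos a b x ltac:(lra)); intros; field; lra. }
    assert (C : (a = 0 /\ b = 0)%Z \/ lexlt a b 0 0 \/ lexlt 0 0 a b) by (unfold lexlt; lia).
    destruct C as [[-> ->] | [C|C]].
    + exists (Finite S); simpl. unfold TL in *. apply T0_ext with (2 := HT).
      exists 0; intros; rewrite mon_00; unfold Rdiv; rewrite Rinv_1; ring.
    + exists (Finite 0); simpl; unfold TL.
      apply T0_ext with (fun x => pp_eval P x / mon a b x * mon a b x).
      * generalize Hrw; apply ev_mono; intros; lra.
      * apply TL_T0_mul with S; auto. apply B0; auto.
    + destruct (Rlt_dec 0 S) as [Sp|Sn].
      * exists p_infty; simpl. apply TI_ext with (1 := Hrw).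
        apply TL_TI_mul with S; auto. apply Binf; auto.
      * exists m_infty; simpl.
        apply TI_ext with (fun x => (- (pp_eval P x / mon a b x)) * mon a b x).
        { generalize Hrw; apply ev_mono; intros; lra. }
        apply TL_TI_mul with (-S); [|lra|apply Binf; auto].
        unfold TL in *. apply T0_ext with (fun x => -1 * (pp_eval P x / mon a b x - S)).
        { exists 0; intros; ring. }
        apply T0_scal; auto.
Qed.

Lemma decomp_inf P S a b P' :
  (forall x, pp_eval P x = S * mon a b x + pp_eval P' x) ->
  (forall c' a' b', In (c',a',b') P' -> lexlt a' b' a b /\ In (c',a',b') P) ->
  lexlt 0 0 a b ->
  (0 < S -> TI (pp_eval P)) /\ (S < 0 -> TI (fun x => - pp_eval P x)).
Proof.
  intros Hid Hk C. generalize (decomp_ratio _ _ _ _ _ Hid Hk); intros HT.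
  assert (Hrw : ev (fun x => pp_eval P x / mon a b x * mon a b x = pp_eval P x)).
  { exists 2; intros x Hx; generalize (mon_pos a b x ltac:(lra)); intros; field; lra. }
  split; intros HS.
  - apply TI_ext with (1 := Hrw). apply TL_TI_mul with S; auto. apply Binf; auto.
  - apply TI_ext with (fun x => (- (pp_eval P x / mon a b x)) * mon a b x).
    { generalize Hrw; apply ev_mono; intros; lra. }
    apply TL_TI_mul with (-S); [|lra|apply Binf; auto].
    unfold TL in *. apply T0_ext with (fun x => -1 * (pp_eval P x / mon a b x - S)).
    { exists 0; intros; ring. }
    apply T0_scal; auto.
Qed.

Lemma locally_pos x : 0 < x -> locally x (fun t => 0 < t).
Proof.
  intros Hx. exists (mkposreal x Hx). intros t Ht.
  change (Rabs (t - x) < x) in Ht. apply Rabs_def2 in Ht. lra.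
Qed.

Lemma der_powerRZ a x : 0 < x -> is_derive (fun t => powerRZ t a) x (IZR a * powerRZ x (a - 1)).
Proof.
  intros Hx.
  assert (H := derivable_pt_lim_power x (IZR a) Hx).
  apply is_derive_Reals in H.
  rewrite powerRZ_Rpower by auto. rewrite minus_IZR.
  apply is_derive_ext_loc with (2 := H).
  generalize (locally_pos x Hx); apply filter_imp; intros t Ht.
  rewrite powerRZ_Rpower by auto; reflexivity.
Qed.

Lemma der_term c a k x : 0 < x ->
  is_derive (fun t => c * powerRZ t a * powerRZ (ln t) (Z.of_nat k)) x
    (c * IZR a * powerRZ x (a - 1) * powerRZ (ln x) (Z.of_nat k) +
     c * IZR (Z.of_nat k) * powerRZ x (a - 1) * powerRZ (ln x) (Z.of_nat k - 1)).
Proof.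
  intros Hx.
  assert (H1 := der_powerRZ a x Hx).
  assert (H2 := is_derive_pow ln k x (/ x) (is_derive_ln x Hx)).
  assert (H3 := is_derive_mult _ _ x _ _ H1 H2 Rmult_comm).
  assert (H4 := is_derive_scal _ x c _ H3).
  apply is_derive_ext with (f := fun t => c * (powerRZ t a * ln t ^ k)).
  { intros t; rewrite pow_powerRZ; simpl; ring. }
  replace (c * IZR a * powerRZ x (a - 1) * powerRZ (ln x) (Z.of_nat k) +
     c * IZR (Z.of_nat k) * powerRZ x (a - 1) * powerRZ (ln x) (Z.of_nat k - 1))
   with (c * (plus (mult (IZR a * powerRZ x (a - 1)) (ln x ^ k))
                 (mult (powerRZ x a) (INR k * / x * ln x ^ Init.Nat.pred k)))).
  { exact H4. }
  unfold plus, mult; simpl.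
  assert (Ea : powerRZ x a = powerRZ x (a - 1) * x).
  { replace a with ((a - 1) + 1)%Z at 1 by ring. rewrite powerRZ_add by lra.
    rewrite powerRZ_1. reflexivity. }
  rewrite Ea, <- pow_powerRZ.
  destruct k as [|j].
  - simpl. ring.
  - rewrite <- INR_IZR_INZ. replace (Z.of_nat (S j) - 1)%Z with (Z.of_nat j) by lia.
    rewrite <- pow_powerRZ. simpl. field. lra.
Qed.

Lemma Dlist : forall P : pp, (forall c a b, In (c,a,b) P -> (0 <= b)%Z) ->
  forall x, 0 < x -> is_derive (pp_eval P) x (pp_eval (pp_deriv P) x).
Proof.
  induction P as [|[[c a] b] P IH]; intros Hb x Hx.
  - simpl. apply is_derive_ext with (f := fun _ => 0); [intros; reflexivity|]. apply (is_derive_const 0 x).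
  - assert (Hb0 : (0 <= b)%Z) by (apply (Hb c a b); left; auto).
    assert (H1 := der_term c a (Z.to_nat b) x Hx). rewrite Z2Nat.id in H1 by auto.
    assert (H2 := IH (fun c' a' b' H => Hb c' a' b' (or_intror H)) x Hx).
    assert (H3 := is_derive_plus _ _ x _ _ H1 H2).
    assert (E : pp_eval (pp_deriv ((c,a,b)::P)) x =
       plus (c * IZR a * powerRZ x (a - 1) * powerRZ (ln x) b +
     c * IZR b * powerRZ x (a - 1) * powerRZ (ln x) (b - 1)) (pp_eval (pp_deriv P) x)).
    { simpl. unfold plus; simpl. ring. }
    rewrite E. eapply is_derive_ext; [|exact H3]. intros t; simpl; reflexivity.
Qed.

Lemma mvt (g Q : R -> R) X y : X <= y -> (forall x, X <= x -> is_derive g x (Q x)) ->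
  exists c, X <= c <= y /\ g y - g X = Q c * (y - X).
Proof.
  intros Hle HD.
  destruct (MVT_gen g X y Q) as [c [Hc E]].
  - intros x Hx. rewrite Rmin_left in Hx by lra. apply HD; lra.
  - intros x Hx. rewrite Rmin_left in Hx by lra. apply continuity_pt_filterlim.
    apply (ex_derive_continuous (K := R_AbsRing) (V := R_NormedModule) g x). exists (Q x). apply HD; lra.
  - rewrite Rmin_left, Rmax_right in Hc by lra. exists c; split; auto.
Qed.

Lemma no_neg_keys (P' : pp) (g : pp) :
  (forall c a b, In (c,a,b) g -> (0 <= a)%Z /\ (0 <= b)%Z) ->
  (forall c' a' b', In (c',a',b') P' -> lexlt a' b' 0 0 /\ In (c',a',b') g) -> P' = [].
Proof.
  intros Hg Hk. destruct P' as [|[[c a] b] P'']; auto.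
  destruct (Hk c a b (or_introl eq_refl)) as [A B]. generalize (Hg _ _ _ B).
  unfold lexlt in A; lia.
Qed.

Lemma L2 (g : pp) :
  (forall c a b, In (c,a,b) g -> (0 <= a)%Z /\ (0 <= b)%Z) ->
  lim_infty (pp_eval g) <> p_infty ->
  exists T : Z, forall n : R, IZR T <= n -> pp_eval (pp_deriv g) n <= 0.
Proof.
  intros Hg Hlim.
  assert (HD : forall x, 0 < x -> is_derive (pp_eval g) x (pp_eval (pp_deriv g) x)).
  { apply Dlist. intros c a b H; apply (Hg c a b H). }
  destruct (decomp (pp_deriv g)) as [H0 | [S [a [b [P' [HS [_ [Hid Hk]]]]]]]].
  - exists 0%Z; intros; rewrite H0; lra.
  - destruct (decomp_sign _ _ _ _ _ Hid Hk) as [Sp Sn].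
    destruct (Rlt_dec S 0) as [Hn|Hn].
    + destruct (Sn Hn) as [X HX]. exists (up X). intros n Hn'.
      destruct (archimed X). left; apply HX; lra.
    + exfalso. destruct (Sp ltac:(lra)) as [X HX].
      set (X' := Rmax X 1).
      assert (HX' : forall x, X' <= x -> 0 < pp_eval (pp_deriv g) x /\ is_derive (pp_eval g) x (pp_eval (pp_deriv g) x)).
      { intros x Hx. unfold X' in Hx. generalize (Rmax_l X 1) (Rmax_r X 1); intros.
        split; [apply HX; lra| apply HD; lra]. }
      assert (Hinc : forall y, X' <= y -> pp_eval g X' <= pp_eval g y /\ (X' < y -> pp_eval g X' < pp_eval g y)).
      { intros y Hy. destruct (mvt (pp_eval g) (pp_eval (pp_deriv g)) X' y Hy (fun x H => proj2 (HX' x H)))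
          as [c [Hc E]]. generalize (proj1 (HX' c ltac:(lra))); intros Q.
        split; [|intros]; nra. }
      destruct (Hinc (X' + 1) ltac:(lra)) as [_ Hs]. specialize (Hs ltac:(lra)).
      destruct (decomp g) as [G0 | [Sg [ag [bg [Pg [HSg [[cg Hcg] [Hidg Hkg]]]]]]]].
      * rewrite !G0 in Hs; lra.
      * generalize (Hg _ _ _ Hcg); intros [Ha Hb].
        assert (C : (ag = 0 /\ bg = 0)%Z \/ lexlt 0 0 ag bg) by (unfold lexlt; lia).
        destruct C as [[-> ->]|C].
        -- assert (Pg = []) by (apply (no_neg_keys Pg g Hg Hkg)). subst Pg.
           rewrite !Hidg, !mon_00 in Hs. simpl in Hs. lra.
        -- destruct (decomp_inf _ _ _ _ _ Hidg Hkg C) as [Ip In].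
           destruct (Rlt_dec 0 Sg) as [Sgp|Sgn].
           ++ apply Hlim. unfold lim_infty. apply (Tbar_lim _ p_infty). apply Ip; auto.
           ++ destruct (In ltac:(lra) (- pp_eval g X')) as [Y HY].
              destruct (Hinc (Rmax X' Y) (Rmax_l _ _)) as [Hm _].
              generalize (HY (Rmax X' Y) (Rmax_r _ _)). lra.
Qed.

Lemma TL_exp h r : TL h r -> TL (fun x => exp (h x)) (exp r).
Proof.
  intros H e He.
  assert (Hc : continuity_pt exp r) by (apply continuity_pt_filterlim; apply continuous_exp).
  unfold continuity_pt, continue_in, limit1_in, limit_in, D_x, no_cond in Hc. simpl in Hc.
  unfold R_dist in Hc.
  destruct (Hc e He) as [alp [Ha Hb]].
  generalize (H alp Ha); apply ev_mono; intros x Hx.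
  destruct (Req_dec r (h x)) as [E|E].
  - rewrite <- E, Rminus_diag, Rabs_R0; lra.
  - apply Hb; auto.
Qed.

Lemma TI_exp h : TI (fun x => - h x) -> TL (fun x => exp (h x)) 0.
Proof.
  intros H e He. generalize (H (- ln e)); apply ev_mono; intros x Hx.
  rewrite Rminus_0_r, Rabs_pos_eq by (left; apply exp_pos).
  rewrite <- (exp_ln e) by auto. apply exp_increasing; lra.
Qed.

Lemma Tbar_exp h d : Tbar h d -> d <> p_infty -> TL (fun x => exp (h x)) (rbar_exp d).
Proof.
  destruct d as [r| |]; simpl; intros H Hd.
  - apply TL_exp; auto.
  - congruence.
  - apply TI_exp; auto.
Qed.

Lemma TL_plus u v a b : TL u a -> TL v b -> TL (fun x => u x + v x) (a + b).
Proof.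
  intros Hu Hv. unfold TL in *. apply T0_ext with (fun x => (u x - a) + (v x - b)).
  { exists 0; intros; ring. } apply T0_plus; auto.
Qed.

Lemma TL_scal c u a : TL u a -> TL (fun x => c * u x) (c * a).
Proof.
  intros Hu. unfold TL in *. apply T0_ext with (fun x => c * (u x - a)).
  { exists 0; intros; ring. } apply T0_scal; auto.
Qed.

Lemma Tbar_ext f g l : (forall x, f x = g x) -> Tbar f l -> Tbar g l.
Proof.
  intros E. destruct l; simpl; unfold TL, TI; intros H.
  - apply T0_ext with (2 := H). exists 0; intros; rewrite E; auto.
  - intros M; generalize (H M); apply ev_mono; intros; rewrite <- E; auto.
  - intros M; generalize (H M); apply ev_mono; intros; rewrite <- E; auto.
Qed.

Lemma L1' (f : pp) c : Tbar (fun a => pp_eval f a + c) (lim_infty (fun a => pp_eval f a + c)).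
Proof.
  destruct (L1 ((c, 0%Z, 0%Z) :: f)) as [l Hl].
  assert (Hl' : Tbar (fun a => pp_eval f a + c) l).
  { apply Tbar_ext with (2 := Hl). intros; simpl; ring. }
  unfold lim_infty; rewrite (Tbar_lim _ _ Hl'); auto.
Qed.

Lemma L1g (g : pp) : Tbar (pp_eval g) (lim_infty (pp_eval g)).
Proof.
  destruct (L1 g) as [l Hl]. unfold lim_infty; rewrite (Tbar_lim _ _ Hl); auto.
Qed.

Definition sumE (L : input) (n : R) : R :=
  fold_right (fun '(gam, f, g) acc =>
    gam * rbar_exp (lim_infty (fun a => pp_eval f a + pp_eval g n)) + acc) 0 L.

Lemma QL_lim (L : input) n :
  (forall gam f g, In (gam,f,g) L -> lim_infty (fun a => pp_eval f a + pp_eval g n) <> p_infty) ->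
  TL (fun a => QL L a n) (sumE L n).
Proof.
  induction L as [|[[gam f] g] L IH]; intros H.
  - unfold TL; simpl. apply T0_ext with (2 := T0_const0). exists 0; intros; ring.
  - simpl. apply TL_plus.
    + apply TL_scal. apply Tbar_exp; [apply L1'|]. apply (H gam f g); left; auto.
    + apply IH; intros; apply (H gam0 f0 g0); right; auto.
Qed.

Lemma QL_nonneg (L : input) a n : (forall gam f g, In (gam,f,g) L -> 0 < gam) -> 0 <= QL L a n.
Proof.
  induction L as [|[[gam f] g] L IH]; intros H; simpl; [lra|].
  assert (0 < gam) by (apply (H gam f g); left; auto).
  generalize (exp_pos (pp_eval f a + pp_eval g n)); intros.
  assert (0 <= QL L a n) by (apply IH; intros; apply (H gam0 f0 g0); right; auto).
  nra.
Qed.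

Lemma QL_ge_term (L : input) a n gam f g : (forall gam f g, In (gam,f,g) L -> 0 < gam) ->
  In (gam,f,g) L -> gam * exp (pp_eval f a + pp_eval g n) <= QL L a n.
Proof.
  induction L as [|[[gam1 f1] g1] L IH]; intros H Hin; simpl in Hin; [tauto|].
  assert (H1 : forall gam f g, In (gam,f,g) L -> 0 < gam) by (intros; apply (H gam0 f0 g0); right; auto).
  assert (0 < gam1) by (apply (H gam1 f1 g1); left; auto).
  generalize (exp_pos (pp_eval f1 a + pp_eval g1 n)); intros.
  destruct Hin as [E|Hin].
  - inversion E; subst. generalize (QL_nonneg L a n H1). simpl. lra.
  - generalize (IH H1 Hin). simpl. nra.
Qed.

Lemma QL_mono (L : input) a n m : (forall gam f g, In (gam,f,g) L -> 0 < gam) ->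
  (forall gam f g, In (gam,f,g) L -> pp_eval g n <= pp_eval g m) -> QL L a n <= QL L a m.
Proof.
  induction L as [|[[gam f] g] L IH]; intros H Hm; simpl; [lra|].
  assert (0 < gam) by (apply (H gam f g); left; auto).
  assert (pp_eval g n <= pp_eval g m) by (apply (Hm gam f g); left; auto).
  assert (exp (pp_eval f a + pp_eval g n) <= exp (pp_eval f a + pp_eval g m)).
  { destruct H1; [left; apply exp_increasing; lra| right; rewrite H1; auto]. }
  assert (QL L a n <= QL L a m) by (apply IH; intros; [apply (H gam0 f0 g0)|apply (Hm gam0 f0 g0)]; right; auto).
  nra.
Qed.

Lemma term_big gam u : 0 < gam -> ln (/ gam) < u -> 1 < gam * exp u.
Proof.
  intros Hg Hu. assert (exp (ln (/ gam)) < exp u) by (apply exp_increasing; auto).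
  rewrite exp_ln in H by (apply Rinv_0_lt_compat; auto).
  apply Rmult_lt_compat_l with (r := gam) in H; auto. rewrite Rinv_r in H; lra.
Qed.

Lemma Zrange_In lo hi z : In z (Zrange lo hi) <-> (lo <= z <= hi)%Z.
Proof.
  unfold Zrange. rewrite in_map_iff. split.
  - intros [i [E Hi]]. apply in_seq in Hi. lia.
  - intros H. exists (Z.to_nat (z - lo)). split; [lia|]. apply in_seq. lia.
Qed.

Lemma uniform_A (P : Z -> R -> Prop) (l : list Z) :
  (forall z, In z l -> exists A, forall a, A <= a -> P z a) ->
  exists A, forall z, In z l -> forall a, A <= a -> P z a.
Proof.
  induction l as [|z l IH]; intros H.
  - exists 0; simpl; tauto.
  - destruct (H z (or_introl eq_refl)) as [A1 H1].
    destruct IH as [A2 H2]; [intros; apply H; right; auto|].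
    exists (Rmax A1 A2); intros z' [E|Hz] a Ha; generalize (Rmax_l A1 A2) (Rmax_r A1 A2); intros.
    + subst; apply H1; lra.
    + apply H2; auto; lra.
Qed.

Lemma TL_le u l B : TL u l -> ev (fun x => u x <= B) -> l <= B.
Proof.
  intros H HB. destruct (Rle_dec l B) as [|Hn]; auto. exfalso.
  generalize (ev_and _ _ HB (H (l - B) ltac:(lra))). intros [X HX].
  destruct (HX X (Rle_refl X)) as [A C]. apply Rabs_def2 in C. lra.
Qed.

Lemma step1_some O (L : input) : forall T T', decide_step1 O L T = Some T' ->
  (T <= T')%Z /\ forall gam f g, In (gam,f,g) L ->
     lim_infty (pp_eval g) <> p_infty /\ (O (pp_deriv g) <= T')%Z.
Proof.
  induction L as [|[[gam f] g] L IH]; intros T T' H; simpl in H.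
  - inversion H; subst; split; [lia| simpl; tauto].
  - destruct (lim_infty (pp_eval g)) as [r| |] eqn:E; try discriminate;
    apply IH in H; destruct H as [H1 H2]; (split; [lia|]);
    intros gam' f' g' [Ei|Hi];
    (try (inversion Ei; subst; split; [rewrite E; discriminate| lia]));
    apply (H2 gam' f' g' Hi).
Qed.

Lemma step1_ex O (L : input) : (forall gam f g, In (gam,f,g) L -> lim_infty (pp_eval g) <> p_infty) ->
  forall T, exists T', decide_step1 O L T = Some T'.
Proof.
  induction L as [|[[gam f] g] L IH]; intros H T; simpl.
  - eauto.
  - assert (IH' := IH (fun gam' f' g' Hi => H gam' f' g' (or_intror Hi))).
    destruct (lim_infty (pp_eval g)) as [r| |] eqn:E; auto.
    exfalso; apply (H gam f g (or_introl eq_refl)); auto.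
Qed.

Lemma rbar_exp_nonneg d : 0 <= rbar_exp d.
Proof. destruct d; simpl; [left; apply exp_pos|lra|lra]. Qed.

Lemma sumE_nonneg (L : input) n : (forall gam f g, In (gam,f,g) L -> 0 < gam) -> 0 <= sumE L n.
Proof.
  induction L as [|[[gam f] g] L IH]; intros H; simpl; [lra|].
  assert (0 < gam) by (apply (H gam f g); left; auto).
  assert (0 <= sumE L n) by (apply IH; intros; apply (H gam0 f0 g0); right; auto).
  generalize (rbar_exp_nonneg (lim_infty (fun a => pp_eval f a + pp_eval g n))); intros.
  nra.
Qed.

Lemma step2_true (L : input) n : forall r, decide_step2 L n r = true -> r < 1 ->
  (forall gam f g, In (gam,f,g) L -> lim_infty (fun a => pp_eval f a + pp_eval g n) <> p_infty)
  /\ r + sumE L n < 1.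
Proof.
  induction L as [|[[gam f] g] L IH]; intros r H Hr.
  - simpl; split; [tauto| lra].
  - simpl in H. simpl.
    destruct (lim_infty (fun alpha => pp_eval f alpha + pp_eval g n)) as [d| |] eqn:E;
      try discriminate;
    destruct (Rle_dec _ _) as [Hle|Hlt]; try discriminate;
    (pose proof (IH _ H) as IH'; destruct IH' as [A B]; [lra|]; split;
      [intros gam' f' g' [Ei|Hi]; [inversion Ei; subst; rewrite E; discriminate| apply (A _ _ _ Hi)]
      | simpl rbar_exp in *; lra]).
Qed.

Lemma step2_sound (L : input) n : forall r,
  (forall gam f g, In (gam,f,g) L -> lim_infty (fun a => pp_eval f a + pp_eval g n) <> p_infty) ->
  (forall gam f g, In (gam,f,g) L -> 0 < gam) ->
  r + sumE L n < 1 -> decide_step2 L n r = true.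
Proof.
  induction L as [|[[gam f] g] L IH]; intros r H Hg Hs; simpl; auto.
  assert (Hg' : forall gam f g, In (gam,f,g) L -> 0 < gam) by (intros; apply (Hg gam0 f0 g0); right; auto).
  assert (H' : forall gam' f' g', In (gam',f',g') L -> lim_infty (fun a => pp_eval f' a + pp_eval g' n) <> p_infty)
    by (intros; apply (H gam' f' g'); right; auto).
  generalize (sumE_nonneg L n Hg'); intros HsL.
  simpl in Hs.
  destruct (lim_infty (fun alpha => pp_eval f alpha + pp_eval g n)) as [d| |] eqn:E.
  - simpl rbar_exp in *. destruct (Rle_dec _ _) as [Hle|Hlt]. { lra. }
    apply IH; auto; lra.
  - exfalso; apply (H gam f g (or_introl eq_refl)); auto.
  - simpl rbar_exp in *. destruct (Rle_dec _ _) as [Hle|Hlt]. { lra. }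
    apply IH; auto; lra.
Qed.

Theorem mainTheorem1 (O : pp -> Z) (HO : NegativeLB_spec O)
  (cp : Z) (data : input)
  (Hcp : (1 <= cp)%Z)
  (Hk : (1 <= length data)%nat)
  (Hgam : forall gam f g, In (gam, f, g) data -> 0 < gam)
  (Hg : forall gam f g, In (gam, f, g) data ->
          forall c a b, In (c, a, b) g -> (0 <= a)%Z /\ (0 <= b)%Z) :
  ((forall alpha0 : R, exists alpha : R, alpha0 <= alpha /\
       exists n : Z, (cp <= n)%Z /\ QL data alpha (IZR n) > 1) ->
     Decide O cp data = false)
  /\
  (forall eps : R, 0 < eps ->
     (exists alpha0 : R, forall alpha : R, alpha0 <= alpha ->
        forall n : Z, (cp <= n)%Z -> QL data alpha (IZR n) <= 1 - eps) ->
     Decide O cp data = true).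
Proof.
  assert (Hgb : forall gam f g, In (gam,f,g) data -> forall c a b, In (c,a,b) g -> (0 <= b)%Z)
    by (intros; eapply Hg; eauto).
  split.
  - intros Hbad. destruct (Decide O cp data) eqn:ED; auto. exfalso.
    unfold Decide in ED. destruct (decide_step1 O data cp) as [T|] eqn:E1; [|discriminate].
    destruct (step1_some O data cp T E1) as [HcT Hitems].
    assert (Hmono : forall gam f g, In (gam,f,g) data -> forall n, IZR T <= n ->
               pp_eval g n <= pp_eval g (IZR T)).
    { intros gam f g Hin n Hn. destruct (Hitems _ _ _ Hin) as [Hl HOT].
      destruct (L2 g (Hg _ _ _ Hin) Hl) as [T0 HT0].
      assert (HOQ := HO (pp_deriv g) (ex_intro _ T0 HT0)).
      assert (HT1 : IZR 1 <= IZR T) by (apply IZR_le; lia). simpl in HT1.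
      destruct (mvt (pp_eval g) (pp_eval (pp_deriv g)) (IZR T) n Hn) as [c [Hc E]].
      { intros x Hx; apply Dlist; [intros; eapply Hgb; eauto| lra]. }
      assert (pp_eval (pp_deriv g) c <= 0).
      { apply HOQ. assert (IZR (O (pp_deriv g)) <= IZR T) by (apply IZR_le; auto). lra. }
      nra. }
    rewrite forallb_forall in ED.
    assert (HA : forall z, In z (Zrange cp T) -> exists A, forall a, A <= a -> QL data a (IZR z) < 1).
    { intros z Hz. specialize (ED z Hz).
      destruct (step2_true data (IZR z) 0 ED ltac:(lra)) as [Hne Hs].
      generalize (QL_lim data (IZR z) Hne); intros HT.
      destruct (HT (1 - sumE data (IZR z)) ltac:(lra)) as [X HX].
      exists X; intros a Ha. specialize (HX a Ha). apply Rabs_def2 in HX. lra. }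
    destruct (uniform_A _ _ HA) as [A HAu].
    destruct (Hbad A) as [a [Ha [n [Hn HQ]]]].
    destruct (Z_le_gt_dec n T) as [HnT|HnT].
    + assert (In n (Zrange cp T)) by (apply Zrange_In; lia). generalize (HAu n H a Ha); lra.
    + assert (In T (Zrange cp T)) by (apply Zrange_In; lia). generalize (HAu T H a Ha); intros.
      assert (QL data a (IZR n) <= QL data a (IZR T)).
      { apply QL_mono; auto. intros gam f g Hin. apply (Hmono _ _ _ Hin). apply IZR_le; lia. }
      lra.
  - intros eps He [a0 H0].
    assert (Hbig : forall gam f g, In (gam,f,g) data -> forall a n, (cp <= n)%Z -> a0 <= a ->
               ln (/ gam) < pp_eval f a + pp_eval g (IZR n) -> False).
    { intros gam f g Hin a n Hn Ha Hl.
      generalize (term_big gam _ (Hgam _ _ _ Hin) Hl) (QL_ge_term data a (IZR n) gam f g Hgam Hin)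
        (H0 a Ha n Hn). lra. }
    assert (Hs1 : forall gam f g, In (gam,f,g) data -> lim_infty (pp_eval g) <> p_infty).
    { intros gam f g Hin Hl. generalize (L1g g); rewrite Hl; simpl; intros HTI.
      destruct (HTI (ln (/ gam) - pp_eval f a0)) as [X HX].
      set (n := Z.max cp (up X)).
      destruct (archimed X) as [Hup _].
      assert (IZR (up X) <= IZR n) by (apply IZR_le; unfold n; lia).
      apply (Hbig gam f g Hin a0 n ltac:(unfold n; lia) (Rle_refl _)).
      generalize (HX (IZR n) ltac:(lra)); lra. }
    destruct (step1_ex O data Hs1 cp) as [T E1].
    unfold Decide; rewrite E1. apply forallb_forall. intros z Hz. apply Zrange_In in Hz.
    assert (Hne : forall gam f g, In (gam,f,g) data ->
               lim_infty (fun a => pp_eval f a + pp_eval g (IZR z)) <> p_infty).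
    { intros gam f g Hin Hl. generalize (L1' f (pp_eval g (IZR z))); rewrite Hl; simpl; intros HTI.
      destruct (HTI (ln (/ gam))) as [X HX].
      apply (Hbig gam f g Hin (Rmax X a0) z ltac:(lia) (Rmax_r _ _)).
      apply HX, Rmax_l. }
    apply step2_sound; auto.
    assert (sumE data (IZR z) <= 1 - eps).
    { apply TL_le with (fun a => QL data a (IZR z)). apply QL_lim; auto.
      exists a0; intros; apply H0; auto; lia. }
    lra.
Qed.
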